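(* Let $S_t,B_t\subseteq\mathbb{R}^d$ be nonempty compact convex sets and $x_t\in\mathbb{B}$, with $\mathrm{proj}(S_t,x_t)=[\underline{s}_t,\overline{s}_t]$ and $\mathrm{proj}(B_t,x_t)=[\underline{b}_t,\overline{b}_t]$. Suppose we are in the strong overlap case, i.e. $\overline{s}_t>\underline{b}_t$, it is not the case that ($\mathrm{width}(S_t,x_t)\ge\mathrm{width}(B_t,x_t)$ and $(\underline{s}_t+\overline{s}_t)/2\le\underline{b}_t$), and it is not the case that ($\mathrm{width}(B_t,x_t)\ge\mathrm{width}(S_t,x_t)$ and $(\underline{b}_t+\overline{b}_t)/2\ge\overline{s}_t$). Let $s\in S_t$, $b\in B_t$, and suppose a price $p_t$ posted to both agents is accepted by both, i.e. $\langle s,x_t\rangle\le p_t\le\langle b,x_t\rangle$; set $S_{t+1}=\{v\in S_t:\langle v,x_t\rangle\le p_t\}$ and $B_{t+1}=\{v\in B_t:\langle v,x_t\rangle\ge p_t\}$. Then at least one of the following holds: \[\mathrm{vol}(S_{t+1}+z\mathbb{B})\le(1-6^{-d})\,\mathrm{vol}(S_t+z\mathbb{B})\ \ \text{for all } z\le\tfrac14\mathrm{width}(S_t,x_t),\] \[\mathrm{vol}(B_{t+1}+z\mathbb{B})\le(1-6^{-d})\,\mathrm{vol}(B_t+z\mathbb{B})\ \ \text{for all } z\le\tfrac14\mathrm{width}(B_t,x_t).\]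
   Context: $\mathbb{B}$ is the Euclidean unit ball in $\mathbb{R}^d$; $A+z\mathbb{B}=\{y+zw:y\in A,w\in\mathbb{B}\}$ is the Minkowski sum; $\mathrm{vol}$ is $d$-dimensional volume. $\mathrm{proj}(A,x)=\{\langle v,x\rangle:v\in A\}$ and $\mathrm{width}(A,x)=\max_{v\in A}\langle v,x\rangle-\min_{v\in A}\langle v,x\rangle$. Here $S_t$ and $B_t$ are the seller's and buyer's confidence regions (containing the true seller vector $s$ and buyer vector $b$ respectively), and in the case that both agents accept, the confidence regions are updated as described. *)

(* Defs.v *)
From HB Require Import structures.
From mathcomp Require Import all_boot all_order all_algebra.
From mathcomp Require Import all_classical all_reals all_analysis.
Set Implicit Arguments. Unset Strict Implicit. Unset Printing Implicit Defensive.
Import Order.TTheory GRing.Theory Num.Theory.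
Import numFieldNormedType.Exports.
Local Open Scope classical_set_scope.
Local Open Scope ring_scope.

Section Defs.
Variables (R : realType) (d : nat).

Definition dotp (v x : 'rV[R]_d) : R := \sum_(i < d) v ord0 i * x ord0 i.

Definition unit_ball : set 'rV[R]_d := [set w | dotp w w <= 1].

Definition convex_in (A : set 'rV[R]_d) : Prop :=
  forall u v t, A u -> A v -> 0 <= t -> t <= 1 -> A (t *: u + (1 - t) *: v).

Definition mink_ball (A : set 'rV[R]_d) (z : R) : set 'rV[R]_d :=
  [set y | exists2 a, A a & exists2 w, unit_ball w & y = a + z *: w].

Definition proj_on (A : set 'rV[R]_d) (x : 'rV[R]_d) : set R := [set dotp v x | v in A].

(* d-dimensional Lebesgue (outer) measure: infimum of total volumes of
   countable covers by closed axis-parallel boxes [a k, b k]. *)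
Definition rbox (a b : 'rV[R]_d) : set 'rV[R]_d :=
  [set x | forall i, a ord0 i <= x ord0 i <= b ord0 i].
Definition box_vol (a b : 'rV[R]_d) : R := \prod_(i < d) Num.max 0 (b ord0 i - a ord0 i).

Definition vol (A : set 'rV[R]_d) : \bar R :=
  ereal_inf [set e : \bar R | exists a b : nat -> 'rV[R]_d,
     A `<=` \bigcup_k rbox (a k) (b k) /\
     e = (\sum_(0 <= k <oo) (box_vol (a k) (b k))%:E)%E].
End Defs.
Arguments unit_ball {R d}.

(* Main.v *)
Require Import Defs.
From HB Require Import structures.
From mathcomp Require Import all_boot all_order all_algebra.
From mathcomp Require Import all_classical all_reals all_analysis.
From mathcomp Require Import ring lra.
From Stdlib Require Cantor.
Import Order.TTheory GRing.Theory Num.Theory.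
Import numFieldNormedType.Exports.
Local Open Scope classical_set_scope.
Local Open Scope ring_scope.
Set Implicit Arguments. Unset Strict Implicit. Unset Printing Implicit Defensive.
Section S.
Variables (R : realType) (d : nat).
Implicit Types (u v w x : 'rV[R]_d).

Lemma dotpC u v : dotp u v = dotp v u.
Proof. by rewrite /dotp; apply: eq_bigr => i _; rewrite mulrC. Qed.

Lemma dotpDl u v w : dotp (u + v) w = dotp u w + dotp v w.
Proof. by rewrite /dotp -big_split; apply: eq_bigr => i _; rewrite mxE mulrDl. Qed.

Lemma dotpZl (a : R) u w : dotp (a *: u) w = a * dotp u w.
Proof. by rewrite /dotp mulr_sumr; apply: eq_bigr => i _; rewrite mxE mulrA. Qed.

Lemma dotpNl u w : dotp (- u) w = - dotp u w.
Proof. by rewrite -scaleN1r dotpZl mulN1r. Qed.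

Lemma dotpDr u v w : dotp w (u + v) = dotp w u + dotp w v.
Proof. by rewrite dotpC dotpDl !(dotpC w). Qed.
Lemma dotpZr (a : R) u w : dotp w (a *: u) = a * dotp w u.
Proof. by rewrite dotpC dotpZl dotpC. Qed.
Lemma dotpNr u w : dotp w (- u) = - dotp w u.
Proof. by rewrite dotpC dotpNl dotpC. Qed.

Lemma dotp_ge0 u : 0 <= dotp u u.
Proof. by rewrite /dotp; apply: sumr_ge0 => i _; rewrite -expr2 sqr_ge0. Qed.

Lemma dotp0r u : dotp u 0 = 0.
Proof. by rewrite /dotp big1 // => i _; rewrite mxE mulr0. Qed.

Lemma dotp_eq0 x : dotp x x = 0 -> x = 0.
Proof.
move=> /eqP; rewrite /dotp psumr_eq0; last by move=> i _; rewrite -expr2 sqr_ge0.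
move=> /allP H; apply/rowP => i; rewrite mxE.
have := H i (mem_index_enum i); rewrite -expr2 sqrf_eq0 => /eqP.
by rewrite (ord1 ord0).
Qed.

End S.
Section S2.
Variables (R : realType) (d : nat).
Implicit Types (u v w x : 'rV[R]_d).

Lemma CS w x : dotp w w <= 1 -> dotp w x <= Num.sqrt (dotp x x).
Proof.
move=> hw; set n := Num.sqrt (dotp x x).
have n0 : 0 <= n by rewrite sqrtr_ge0.
have nn : n * n = dotp x x by rewrite -expr2 sqr_sqrtr ?dotp_ge0.
have [/eqP|np] := eqVneq n 0.
  rewrite sqrtr_eq0 => hx; have hx0 : dotp x x = 0 by apply/le_anti; rewrite hx dotp_ge0.
  by rewrite (dotp_eq0 hx0) dotp0r.
have npos : 0 < n by rewrite lt_neqAle eq_sym np n0.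
have := dotp_ge0 (n *: w - x).
rewrite !(dotpDl, dotpDr, dotpNl, dotpNr, dotpZl, dotpZr) (dotpC x w) -nn => h.
have : n * (dotp w x - n) <= 0 by nra.
by rewrite pmulr_rle0 // subr_le0.
Qed.

Lemma ball_convex w1 w2 t : dotp w1 w1 <= 1 -> dotp w2 w2 <= 1 -> 0 <= t -> t <= 1 ->
  dotp (t *: w1 + (1 - t) *: w2) (t *: w1 + (1 - t) *: w2) <= 1.
Proof.
move=> h1 h2 t0 t1.
have := dotp_ge0 (w1 - w2).
rewrite !(dotpDl, dotpDr, dotpNl, dotpNr, dotpZl, dotpZr) (dotpC w2 w1) => h.
set a := dotp w1 w1 in h h1 *; set b := dotp w2 w2 in h h2 *; set c := dotp w1 w2 in h *.
have hc : 2 * c <= a + b by lra.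
have htt : 0 <= t * (1 - t) by apply: mulr_ge0; lra.
have hh := ler_wpM2r htt hc.
have -> : t * (t * a) + t * ((1 - t) * c) + ((1 - t) * (t * c) + (1 - t) * ((1 - t) * b))
  = t * t * a + (1 - t) * (1 - t) * b + 2 * c * (t * (1 - t)) by ring.
have E : t * a + (1 - t) * b = t * t * a + (1 - t) * (1 - t) * b + (a + b) * (t * (1 - t)) by ring.
have : t * a + (1 - t) * b <= 1 by nra.
lra.
Qed.

End S2.
Section S3.
Variables (R : realType) (d : nat).
Local Open Scope ereal_scope.

Lemma box_vol_ge0 (a b : 'rV[R]_d) : (0 <= box_vol a b)%R.
Proof. by rewrite /box_vol; apply: prodr_ge0 => i _; rewrite le_max lexx. Qed.

Lemma vol_ge0 (A : set 'rV[R]_d) : 0 <= vol A.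
Proof.
apply: le_ereal_inf_tmp => _ [a [b [_ ->]]].
by apply: nneseries_ge0 => n _; rewrite lee_fin box_vol_ge0.
Qed.

Lemma vol_le (A B : set 'rV[R]_d) : A `<=` B -> vol A <= vol B.
Proof.
move=> AB; apply: ereal_inf_le_tmp => _ [a [b [hB ->]]].
by exists a, b; split => //; apply: subset_trans hB.
Qed.

Lemma vol_cover2 (A : set 'rV[R]_d) (a b : nat -> nat -> 'rV[R]_d) :
  (forall y, A y -> exists k j, rbox (a k j) (b k j) y) ->
  vol A <= \sum_(k <oo) \sum_(j <oo) (box_vol (a k j) (b k j))%:E.
Proof.
move=> H.
pose g n := Cantor.of_nat n.
have H1 : vol A <= \sum_(n <oo) (box_vol (a (g n).1 (g n).2) (b (g n).1 (g n).2))%:E.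
  apply: ereal_inf_lbound.
  exists (fun n => a (g n).1 (g n).2), (fun n => b (g n).1 (g n).2); split => //.
  move=> y /H [k [j hy]]; exists (Cantor.to_nat (k, j)) => //.
  by rewrite /g Cantor.cancel_of_to.
apply: le_trans H1 _; rewrite le_eqVlt; apply/orP; left; apply/eqP.
have F0 : forall p : nat * nat, 0 <= (box_vol (a p.1 p.2) (b p.1 p.2))%:E.
  by move=> p; rewrite lee_fin box_vol_ge0.
rewrite nneseries_esumT; last by move=> n; apply: F0.
rewrite -(reindex_esum [set: nat] [set: nat * nat] g (fun p => (box_vol (a p.1 p.2) (b p.1 p.2))%:E)); last first.
  split.
  - by move=> n _.
  - move=> m n _ _ hmn.
    by rewrite -(Cantor.cancel_to_of m) -(Cantor.cancel_to_of n); congr Cantor.to_nat.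
  - by move=> p _; exists (Cantor.to_nat p) => //; rewrite /g Cantor.cancel_of_to.
rewrite nneseries_esumT; last by move=> n; apply: nneseries_ge0 => j _ _; apply: (F0 (n, j)).
have -> : [set: nat * nat] = [set: nat] `*`` (fun=> [set: nat]).
  by apply/seteqP; split => // p.
rewrite -(@esum_esum R nat nat [set: nat] (fun=> [set: nat]) (fun i j => (box_vol (a i j) (b i j))%:E)); last by move=> i j _ _; apply: (F0 (i, j)).
apply: eq_esum => k _.
by rewrite nneseries_esumT // => j; apply: (F0 (k, j)).
Qed.

End S3.
Section S4.
Variables (R : realType) (d : nat).

Lemma homot_ineq (l a c y : R) : (0 < l)%R -> (a <= c + l * (y - c))%R ->
  (c + l^-1 * (a - c) <= y)%R.
Proof.
move=> l0 h; rewrite -subr_ge0.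
have -> : (y - (c + l^-1 * (a - c)) = l^-1 * ((c + l * (y - c)) - a))%R.
  by field; rewrite gt_eqF.
by apply: mulr_ge0; [rewrite invr_ge0 ltW | rewrite subr_ge0].
Qed.

Lemma homot_ineq2 (l b c y : R) : (0 < l)%R -> (c + l * (y - c) <= b)%R ->
  (y <= c + l^-1 * (b - c))%R.
Proof.
move=> l0 h; rewrite -subr_ge0.
have -> : (c + l^-1 * (b - c) - y = l^-1 * (b - (c + l * (y - c))))%R.
  by field; rewrite gt_eqF.
by apply: mulr_ge0; [rewrite invr_ge0 ltW | rewrite subr_ge0].
Qed.

Lemma vol_homot (c : 'rV[R]_d) (l : R) (K : set 'rV[R]_d) : (0 < l)%R ->
  ((l ^+ d)%:E * vol K <= vol [set (c + l *: (k - c))%R | k in K])%E.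
Proof.
move=> l0; apply: le_ereal_inf_tmp => _ [a [b [hH ->]]].
pose a' n := c + l^-1 *: (a n - c); pose b' n := c + l^-1 *: (b n - c).
have H1 : (vol K <= \sum_(n <oo) (box_vol (a' n) (b' n))%:E)%E.
  apply: ereal_inf_lbound; exists a', b'; split => //.
  move=> y Ky; have [k _ hk] := hH (c + l *: (y - c)) (ex_intro2 _ _ y Ky erefl).
  exists k => // i; have /andP[h1 h2] := hk i; move: h1 h2; rewrite !mxE => h1 h2.
  by rewrite homot_ineq // homot_ineq2.
have E : forall n, box_vol (a' n) (b' n) = ((l ^+ d)^-1 * box_vol (a n) (b n))%R.
  move=> n; rewrite /box_vol -exprVn -[X in (_ ^+ X)%R](card_ord d) -prodr_const -big_split /=.
  apply: eq_bigr => i _; rewrite !mxE maxr_pMr ?invr_ge0 ?ltW // mulr0; congr Num.max.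
  ring.
have l0' : (0 < l ^+ d)%R by rewrite exprn_gt0.
apply: le_trans (lee_wpmul2l _ H1) _; first by rewrite lee_fin ltW.
under eq_eseriesr do rewrite E EFinM.
rewrite nneseriesZl; last by move=> i _; rewrite lee_fin box_vol_ge0.
by rewrite muleA -EFinM mulfV ?gt_eqF // mul1e.
Qed.

End S4.
Section S5.
Variables (R : realType) (d : nat).
Implicit Types (a b u y x : 'rV[R]_d).

Definition Lw a b (i : 'I_d) : R := Num.max 0 (b ord0 i - a ord0 i).
Definition sublo a b (M : nat) (f : 'I_d -> nat) : 'rV[R]_d :=
  \row_i (a ord0 i + (f i)%:R * (Lw a b i / M%:R)).
Definition subhi a b (M : nat) (f : 'I_d -> nat) : 'rV[R]_d :=
  \row_i (a ord0 i + (f i).+1%:R * (Lw a b i / M%:R)).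

Lemma Lw_ge0 a b i : 0 <= Lw a b i.
Proof. by rewrite /Lw le_max lexx. Qed.

Lemma box_vol_sub a b M f : (0 < M)%N ->
  box_vol (sublo a b M f) (subhi a b M f) = box_vol a b / M%:R ^+ d.
Proof.
move=> M0.
have -> : box_vol a b / M%:R ^+ d = \prod_i (Lw a b i / M%:R).
  by rewrite /box_vol big_split /= prodr_const card_ord exprVn.
rewrite /box_vol; apply: eq_bigr => i _; rewrite !mxE.
have -> : a ord0 i + (f i).+1%:R * (Lw a b i / M%:R) - (a ord0 i + (f i)%:R * (Lw a b i / M%:R))
  = Lw a b i / M%:R by rewrite -natr1; ring.
by rewrite max_r // divr_ge0 ?Lw_ge0 ?ler0n.
Qed.

Lemma sub1D (a0 b0 y : R) (M : nat) : (0 < M)%N -> a0 <= y -> y <= b0 ->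
  exists j : 'I_M, a0 + j%:R * ((b0 - a0) / M%:R) <= y <= a0 + j.+1%:R * ((b0 - a0) / M%:R).
Proof.
move=> M0 h1 h2.
have Mp : (0 < M%:R :> R) by rewrite ltr0n.
have [e|ne] := eqVneq b0 a0.
  exists (Ordinal M0); rewrite e subrr !mul0r !mulr0 !addr0.
  by apply/andP; split => //; rewrite -e.
have Lp : 0 < b0 - a0 by rewrite subr_gt0 lt_neqAle eq_sym ne /= (le_trans h1 h2).
set t := (y - a0) * M%:R / (b0 - a0).
have t0 : 0 <= t by rewrite /t; apply: divr_ge0; [apply: mulr_ge0; rewrite ?subr_ge0 ?ler0n | apply: ltW].
have tM : t <= M%:R.
  rewrite /t ler_pdivrMr // mulrC ler_pM2l //; lra.
set q := (b0 - a0) / M%:R.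
have qp : 0 < q by rewrite /q divr_gt0.
have tq : t = (y - a0) / q by rewrite /t /q; field; rewrite !gt_eqF.
have key : forall j : nat, (j%:R <= t) = (a0 + j%:R * q <= y).
  move=> j; rewrite tq ler_pdivlMr //.
  by apply/idP/idP => h; lra.
have key2 : forall j : nat, (t <= j%:R) = (y <= a0 + j%:R * q).
  move=> j; rewrite tq ler_pdivrMr //.
  by apply/idP/idP => h; lra.
have [tr|tr] := ltnP (Num.truncn t) M.
  exists (Ordinal tr); rewrite /= -key -key2.
  by have := truncn_itv t0; case/andP => -> /ltW ->.
have jM : (M.-1 < M)%N by rewrite ltn_predL.
exists (Ordinal jM); rewrite /= -key -key2 prednK //.
rewrite tM andbT.
have h3 : (Num.truncn t)%:R <= t by rewrite truncn_le.
have h4 : M%:R <= (Num.truncn t)%:R :> R by rewrite ler_nat.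
have h5 : (M.-1)%:R <= M%:R :> R by rewrite ler_nat leq_pred.
lra.
Qed.

End S5.
Section S6.
Variables (R : realType) (d : nat).
Implicit Types (a b u y x : 'rV[R]_d).

Lemma sub_cover a b M y : (0 < M)%N -> rbox a b y ->
  exists f : {ffun 'I_d -> 'I_M}, rbox (sublo a b M (fun i => val (f i))) (subhi a b M (fun i => val (f i))) y.
Proof.
move=> M0 hy.
have H : forall i : 'I_d, exists j : 'I_M,
    a ord0 i + j%:R * (Lw a b i / M%:R) <= y ord0 i <= a ord0 i + j.+1%:R * (Lw a b i / M%:R).
  move=> i; have /andP[h1 h2] := hy i.
  have -> : Lw a b i = b ord0 i - a ord0 i by rewrite /Lw max_r // subr_ge0 (le_trans h1 h2).
  exact: sub1D.
have [u hu] := fin_all_exists H.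
by exists [ffun i => u i] => i; rewrite !mxE ffunE.
Qed.

Lemma sub_var a b M (f : 'I_d -> nat) u y x :
  rbox (sublo a b M f) (subhi a b M f) u -> rbox (sublo a b M f) (subhi a b M f) y ->
  dotp y x - dotp u x <= \sum_i `|x ord0 i| * (Lw a b i / M%:R).
Proof.
move=> hu hy; rewrite /dotp -sumrB; apply: ler_sum => i _.
have /andP[u1 u2] := hu i; have /andP[y1 y2] := hy i.
move: u1 u2 y1 y2; rewrite !mxE => u1 u2 y1 y2.
rewrite -mulrBl; apply: le_trans (ler_norm _) _; rewrite normrM mulrC.
apply: ler_wpM2l => //.
have -> : Lw a b i / M%:R = a ord0 i + (f i).+1%:R * (Lw a b i / M%:R) - (a ord0 i + (f i)%:R * (Lw a b i / M%:R)).
  by rewrite -natr1; ring.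
rewrite ler_norml; apply/andP; split; lra.
Qed.

Lemma series_cut (f : nat -> \bar R) N : (forall j, (0 <= f j)%E) ->
  (forall j, (N <= j)%N -> f j = 0%E) -> (\sum_(j <oo) f j = \sum_(0 <= j < N) f j)%E.
Proof.
move=> f0 fN; rewrite (nneseries_split 0 N) // add0n eseries0 ?adde0 //.
by move=> i Ni _; apply: fN.
Qed.

Lemma box_vol_degen : (0 < d)%N -> box_vol (const_mx 1 : 'rV[R]_d) 0 = 0.
Proof.
case: d => // n _; rewrite /box_vol big_ord_recl !mxE sub0r max_l ?mul0r //.
Qed.

End S6.
Section S7.
Variables (R : realType) (d : nat).

Lemma vol_sep (A H K : set 'rV[R]_d) (x : 'rV[R]_d) (t1 t2 : R) : (0 < d)%N -> t1 < t2 ->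
  (forall u, A u -> dotp u x <= t1) -> (forall h, H h -> t2 <= dotp h x) ->
  A `<=` K -> H `<=` K -> (vol A + vol H <= vol K)%E.
Proof.
move=> d0 t12 hA hH AK HK.
apply: le_ereal_inf_tmp => _ [a [b [hK ->]]].
pose g := t2 - t1.
have g0 : 0 < g by rewrite /g subr_gt0.
pose C k := \sum_i `|x ord0 i| * Lw (a k) (b k) i.
have C0 : forall k, 0 <= C k.
  by move=> k; apply: sumr_ge0 => i _; apply: mulr_ge0 => //; apply: Lw_ge0.
pose m k := Num.truncn (C k / g).
have Cm : forall k, C k / (m k).+1%:R < g.
  move=> k; have h := truncnS_gt (C k / g).
  move: h; rewrite ltr_pdivrMr // => h.
  by rewrite ltr_pdivrMr ?ltr0n // mulrC.
pose F k j : {ffun 'I_d -> 'I_(m k).+1} := nth [ffun=> ord0] (enum {ffun 'I_d -> 'I_(m k).+1}) j.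
pose N k := #|{ffun 'I_d -> 'I_(m k).+1}|.
pose lo k j := sublo (a k) (b k) (m k).+1 (fun i => val (F k j i)).
pose hi k j := subhi (a k) (b k) (m k).+1 (fun i => val (F k j i)).
pose P k j := exists2 u, A u & rbox (lo k j) (hi k j) u.
pose inA k j := ((j < N k)%N && `[< P k j >]).
pose inH k j := ((j < N k)%N && ~~ `[< P k j >]).
pose aA k j := if inA k j then lo k j else const_mx 1.
pose bA k j := if inA k j then hi k j else 0.
pose aH k j := if inH k j then lo k j else const_mx 1.
pose bH k j := if inH k j then hi k j else 0.
have cov : forall y k0, rbox (a k0) (b k0) y -> exists j, (j < N k0)%N /\ rbox (lo k0 j) (hi k0 j) y.
  move=> y k0 hy; have [f hf] := sub_cover (ltn0Sn (m k0)) hy.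
  have fE : f \in enum {ffun 'I_d -> 'I_(m k0).+1} by rewrite mem_enum.
  exists (index f (enum {ffun 'I_d -> 'I_(m k0).+1})); split.
    by rewrite /N cardE index_mem.
  by rewrite /lo /hi /F nth_index.
have VA : (vol A <= \sum_(k <oo) \sum_(j <oo) (box_vol (aA k j) (bA k j))%:E)%E.
  apply: vol_cover2 => u Au.
  have [k _ hk] := hK u (AK u Au).
  have [j [hj hb]] := cov u k hk.
  exists k, j; rewrite /aA /bA /inA hj /=.
  have -> : `[< P k j >] = true by apply/asboolP; exists u.
  by [].
have VH : (vol H <= \sum_(k <oo) \sum_(j <oo) (box_vol (aH k j) (bH k j))%:E)%E.
  apply: vol_cover2 => y Hy.
  have [k _ hk] := hK y (HK y Hy).
  have [j [hj hb]] := cov y k hk.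
  exists k, j; rewrite /aH /bH /inH hj /=.
  have -> : `[< P k j >] = false.
    apply/asboolP => -[u Au hu].
    have h1 := sub_var x hu hb.
    have h2 := hA u Au; have h3 := hH y Hy.
    have h4 := Cm k.
    have e : \sum_i `|x ord0 i| * (Lw (a k) (b k) i / (m k).+1%:R) = C k / (m k).+1%:R.
      by rewrite /C mulr_suml; apply: eq_bigr => i _; rewrite mulrA.
    rewrite e in h1.
    have h5 : g = t2 - t1 := erefl.
    move: h1 h4; rewrite h5; generalize (C k / (m k).+1%:R) => q h1 h4; lra.
  by [].
apply: le_trans (leeD VA VH) _.
have T : forall k j, ((box_vol (aA k j) (bA k j))%:E + (box_vol (aH k j) (bH k j))%:E
    = if (j < N k)%N then (box_vol (a k) (b k) / (m k).+1%:R ^+ d)%:E else 0)%E.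
  move=> k j; rewrite /aA /bA /aH /bH /inA /inH; case: (j < N k)%N => /=.
    by case: `[< P k j >] => /=; rewrite box_vol_sub // box_vol_degen // ?adde0 ?add0e.
  by rewrite box_vol_degen // adde0.
have ge0 : forall (c1 c2 : 'rV[R]_d), (0 <= (box_vol c1 c2)%:E)%E.
  by move=> c1 c2; rewrite lee_fin box_vol_ge0.
rewrite -nneseriesD; last 2 first.
- by move=> k _ _; apply: nneseries_ge0 => j _ _.
- by move=> k _ _; apply: nneseries_ge0 => j _ _.
rewrite le_eqVlt; apply/orP; left; apply/eqP; apply: eq_eseriesr => k _.
rewrite -nneseriesD; last 2 first.
- by move=> j _ _.
- by move=> j _ _.
under eq_eseriesr do rewrite T.
rewrite (@series_cut _ _ (N k)); last first.
- by move=> j hj; rewrite leqNgt in hj; rewrite (negbTE hj).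
- by move=> j; case: ifP => // _; rewrite lee_fin divr_ge0 ?box_vol_ge0 // exprn_ge0.
rewrite big_nat_cond (eq_bigr (fun=> (box_vol (a k) (b k) / (m k).+1%:R ^+ d)%:E)); last first.
  by move=> j /andP[/andP[_ ->]].
rewrite -big_nat_cond sumEFin sumr_const_nat subn0 /N card_ffun !card_ord.
by rewrite -[_ *+ ((m k).+1 ^ d)%N]mulr_natr natrX mulfVK // expf_neq0 // pnatr_eq0.
Qed.

End S7.
Section S8.
Variables (R : realType) (d : nat).

Lemma one_side (K0 : set 'rV[R]_d) (x : 'rV[R]_d) (lo hi p z : R) (top : 'rV[R]_d) :
  (0 < d)%N -> convex_in K0 -> dotp x x <= 1 -> (forall a, K0 a -> lo <= dotp a x) ->
  K0 top -> dotp top x = hi -> (hi - lo) / 4 < hi - p -> 0 <= z -> z <= (hi - lo) / 4 ->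
  (vol (mink_ball [set v | K0 v /\ (dotp v x <= p)%R] z) <=
     (1 - 6%:R ^- d)%:E * vol (mink_ball K0 z))%E.
Proof.
move=> d0 cK x1 hlo Ktop htop hp z0 zb.
set n := Num.sqrt (dotp x x).
have n0 : 0 <= n by rewrite sqrtr_ge0.
have nn : n * n = dotp x x by rewrite -expr2 sqr_sqrtr ?dotp_ge0.
have n1 : n <= 1 by nra.
pose ws := n^-1 *: x.
have wsx : dotp ws x = n by rewrite /ws dotpZl -nn; have [->|nz] := eqVneq n 0;
  [rewrite invr0 mul0r | rewrite mulKf].
have wsb : dotp ws ws <= 1.
  rewrite /ws dotpZl dotpZr -nn; have [->|nz] := eqVneq n 0; first by rewrite invr0 !mul0r.
  by rewrite mulKf // mulVf.
have CSx : forall w, dotp w w <= 1 -> - n <= dotp w x <= n.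
  move=> w hw; rewrite CS // andbT lerNl -dotpNl CS //.
  by rewrite dotpNl dotpNr opprK.
pose c := top + z *: ws.
pose l : R := 6^-1.
have l0 : 0 < l by rewrite /l invr_gt0 ltr0n.
set K := mink_ball K0 z.
set A := mink_ball [set v | K0 v /\ dotp v x <= p] z.
pose Hs := [set c + l *: (k - c) | k in K].
have cx : dotp c x = hi + z * n by rewrite /c dotpDl dotpZl wsx htop.
have zn : z * n <= z by rewrite ler_piMr.
have zn0 : 0 <= z * n by rewrite mulr_ge0.
have HA : forall u, A u -> dotp u x <= p + z * n.
  move=> u [a [Ka ap] [w wb ->]]; rewrite dotpDl dotpZl.
  have /andP[_ h] := CSx w wb; have := ler_wpM2l z0 h; lra.
have AK : A `<=` K by move=> u [a [Ka _] [w wb ->]]; exists a => //; exists w.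
have HK : Hs `<=` K.
  move=> _ [k [a Ka [w wb ->]] <-].
  exists (l *: a + (1 - l) *: top).
    by apply: cK => //; [exact: ltW | rewrite /l invf_le1 ?ler1n ?ltr0n].
  exists (l *: w + (1 - l) *: ws).
    rewrite /unit_ball /=; apply: ball_convex => //; first exact: ltW.
    by rewrite /l invf_le1 ?ler1n ?ltr0n.
  by apply/rowP => i; rewrite /c !mxE; ring.
clearbody c.
have HH : forall h, Hs h -> hi + z * n - l * (hi - lo + 2 * z * n) <= dotp h x.
  move=> _ [k [a Ka [w wb ->]] <-].
  rewrite !(dotpDl, dotpZl, dotpNl) cx.
  have /andP[h _] := CSx w wb; have := ler_wpM2l z0 h.
  have := hlo a Ka; rewrite /l; lra.
have sep := vol_sep d0 _ HA HH AK HK.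
have sep' : (vol A + vol Hs <= vol K)%E.
  apply: sep; rewrite /l; lra.
have hom : ((l ^+ d)%:E * vol K <= vol Hs)%E by apply: vol_homot.
have VA0 := vol_ge0 A; have VK0 := vol_ge0 K.
rewrite -exprVn -/l.
have mu0 : 0 < l ^+ d by rewrite exprn_gt0.
have mu1 : l ^+ d < 1 by rewrite exprn_ilt1 ?ltW // ?/l ?invf_lt1 ?ltr1n ?ltr0n // -lt0n.
move: sep' hom VA0 VK0; rewrite -/Hs.
case: (vol K) => [r||]; case: (vol A) => [a||]; case: (vol Hs) => [h||] //=.
all: rewrite ?lee_fin.
- by move=> h1 h2 h3 h4; rewrite mulrBl mul1r; lra.
all: by move=> *; rewrite gt0_muley ?lte_fin ?subr_gt0 // leey.
Qed.

End S8.
Unset Implicit Arguments.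
Theorem lemma4p7 (R : realType) (d : nat)
  (S B : set 'rV[R]_d) (x : 'rV[R]_d) (slo shi blo bhi p : R)
  (s b : 'rV[R]_d) :
  S !=set0 -> compact S -> convex_in S ->
  B !=set0 -> compact B -> convex_in B ->
  unit_ball x ->
  proj_on S x = [set` `[slo, shi]] -> proj_on B x = [set` `[blo, bhi]] ->
  (* strong overlap case *)
  shi > blo ->
  ~ (shi - slo >= bhi - blo /\ (slo + shi) / 2 <= blo) ->
  ~ (bhi - blo >= shi - slo /\ (blo + bhi) / 2 >= shi) ->
  S s -> B b ->
  dotp s x <= p -> p <= dotp b x ->
  let S' := [set v | S v /\ dotp v x <= p] in
  let B' := [set v | B v /\ dotp v x >= p] in
  (forall z : R, 0 <= z -> z <= (shi - slo) / 4 ->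
     (vol (mink_ball S' z) <= (1 - 6%:R ^- d)%:E * vol (mink_ball S z))%E)
  \/
  (forall z : R, 0 <= z -> z <= (bhi - blo) / 4 ->
     (vol (mink_ball B' z) <= (1 - 6%:R ^- d)%:E * vol (mink_ball B z))%E).
Proof.
move=> _ _ cvS _ _ cvB hx hSp hBp hov n1 n2 Ss Bb sp pb S' B'.
have Sin : forall a, S a -> slo <= dotp a x <= shi.
  move=> a Sa; have : proj_on S x (dotp a x) by exists a.
  by rewrite hSp /= in_itv.
have Bin : forall a, B a -> blo <= dotp a x <= bhi.
  move=> a Ba; have : proj_on B x (dotp a x) by exists a.
  by rewrite hBp /= in_itv.
have [top Stop htop] : exists2 top, S top & dotp top x = shi.
  have /andP[h1 h2] := Sin s Ss.
  have : proj_on S x shi by rewrite hSp /= in_itv /= lexx andbT (le_trans h1 h2).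
  by case=> v Sv <-; exists v.
have [bot Bbot hbot] : exists2 bot, B bot & dotp bot x = blo.
  have /andP[h1 h2] := Bin b Bb.
  have : proj_on B x blo by rewrite hBp /= in_itv /= lexx (le_trans h1 h2).
  by case=> v Bv <-; exists v.
have d0 : (0 < d)%N.
  rewrite lt0n; apply/negP => /eqP d0.
  have z0 : forall v w : 'rV[R]_d, dotp v w = 0.
    move=> v w; rewrite /dotp big1 // => i _.
    by have := leq_trans (ltn_ord i) (eq_leq d0); rewrite ltn0.
  by move: hov; rewrite -htop -hbot !z0 ltxx.
have hxx : dotp x x <= 1 by [].
have Sa := fun a Sa => proj1 (andP (Sin a Sa)).
have Bb2 := fun a Ba => proj2 (andP (Bin a Ba)).
have hs := Sin s Ss; have hb := Bin b Bb.
have key : blo + (bhi - blo) / 4 < shi - (shi - slo) / 4.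
  case: (lerP (bhi - blo) (shi - slo)) => hw.
    have : ~ ((slo + shi) / 2 <= blo) by move=> h; apply: n1; split.
    move/negP; rewrite -ltNge => h; lra.
  have : ~ (shi <= (blo + bhi) / 2) by move=> h; apply: n2; split => //; exact: ltW.
  move/negP; rewrite -ltNge => h; lra.
have [pl|pl] := ltrP p (shi - (shi - slo) / 4).
  left => z z0 zb.
  apply: (one_side d0 cvS hxx Sa Stop htop) => //; lra.
right => z z0 zb.
have eB : B' = [set v | B v /\ (dotp v (- x) <= - p)%R].
  by apply/seteqP; split => v [Bv hv]; split => //; move: hv; rewrite dotpNr lerN2.
rewrite eB.
apply: (one_side (lo := - bhi) (hi := - blo) d0 cvB _ _ Bbot) => //.
- by rewrite dotpNl dotpNr opprK.
- by move=> a Ba; rewrite dotpNr lerN2; apply: Bb2.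
- by rewrite dotpNr hbot.
- lra.
- lra.
Qed.
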